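(* Let $\mathcal{F}=\{f_1,\dots,f_M\}$ be a frame of $\mathbb{R}^N$ partitioned into $K$ disjoint pools indexed by $I_1,\dots,I_K$ (disjoint, union $\{1,\dots,M\}$), each of size $|I_k|=L$. Let $P_\infty(x)=\big(\max_{j\in I_k}|\langle x,f_j\rangle|\big)_{k=1}^K$ be the max-pooling operator. Then for all $x,x'\in\mathbb{R}^N$, $$d(x,x')\Big(\min_{s,s'\in\mathcal{S}}A(s,s')\Big)\le\|P_\infty(x)-P_\infty(x')\|_2,$$ where $d(x,x')=\min(\|x-x'\|,\|x+x'\|)$ and, for $s,s'\in\mathcal{S}$ with $\mathcal{J}=\mathcal{J}(s,s')$, $$A(s,s')=\Big\{\min_{\Omega\subseteq\mathcal{J}}\big(\lambda_-^2(\mathcal{F}_{s,\Omega})+\lambda_-^2(\mathcal{F}_{s,\mathcal{J}\setminus\Omega})\big)+\frac{1}{4L}\min_{\Omega\subseteq\mathcal{J}^c}\big(\Lambda_{s,s',\Omega}^2+\Lambda_{s,s',\mathcal{J}^c\setminus\Omega}^2\big)\Big\}^{1/2}.$$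
   Context: Frame bounds: for a finite family $G=\{g_i\}\subset\mathbb{R}^N$, $\lambda_-(G)=\inf_{\|x\|=1}(\sum_i\langle x,g_i\rangle^2)^{1/2}$, $\lambda_+(G)=\sup_{\|x\|=1}(\sum_i\langle x,g_i\rangle^2)^{1/2}$, with $\lambda_-(\emptyset)=0$. Switches: for $x\in\mathbb{R}^N$, $s(x)\in\prod_k I_k$ is given by $s(x)_k=\arg\max_{j\in I_k}|\langle x,f_j\rangle|$, and $\mathcal{S}=\{s(x):x\in\mathbb{R}^N\}$. For $s\in\mathcal{S}$, the cone $\mathcal{C}_s=\bigcap_{k\le K}\bigcap_{j\in I_k}\{x:|\langle x,f_{s_k}\rangle|\ge|\langle x,f_j\rangle|\}$. For $s\in\mathcal{S}$ and $\Omega\subseteq\{1,\dots,K\}$, $\mathcal{F}_{s,\Omega}=(f_{s_k})_{k\in\Omega}$ and $\mathcal{F}_s|_\Omega$ is the linear map $x\mapsto(\langle x,f_{s_k}\rangle)_{k\in\Omega}\in\mathbb{R}^{|\Omega|}$; $\mathcal{F}|_\Omega$ denotes the family $\{f_j: j\in\bigcup_{k\in\Omega}I_k\}$ of all vectors in the pools indexed by $\Omega$. For nonzero vectors $u,v$, $\theta(u,v)=\arccos\big(|\langle u,v\rangle|/(\|u\|\|v\|)\big)$. For $s,s'\in\mathcal{S}$ and $\Omega\subseteq\{1,\dots,K\}$, $\beta(s,s',\Omega)=\min\{\theta(u,v): u\in\mathcal{F}_s|_\Omega(\mathcal{C}_s),\ v\in\mathcal{F}_{s'}|_\Omega(\mathcal{C}_{s'})\}$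 (a modified first principal angle restricted to the images of the cones), and $\Lambda_{s,s',\Omega}=\lambda_-(\mathcal{F}|_\Omega)\sin(\beta(s,s',\Omega))$. Finally $\mathcal{J}(s,s')=\{k: s_k=s'_k\}$ and $\mathcal{J}^c=\{1,\dots,K\}\setminus\mathcal{J}$. *)

(* Defs.v *)
From mathcomp Require Import all_boot all_order all_algebra.
From mathcomp Require Import classical_sets boolp reals trigo.
Set Implicit Arguments. Unset Strict Implicit. Unset Printing Implicit Defensive.
Import Order.TTheory GRing.Theory Num.Theory.
Local Open Scope ring_scope.
Local Open Scope classical_set_scope.

Section Defs.
Variables (R : realType) (N M K : nat).

Definition dotv (u v : 'rV[R]_N) : R := \sum_(i < N) u 0 i * v 0 i.
Definition enorm (u : 'rV[R]_N) : R := Num.sqrt (dotv u u).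

Definition lambda_minus (I : finType) (A : {set I}) (g : I -> 'rV[R]_N) : R :=
  inf [set Num.sqrt (\sum_(i in A) (dotv x (g i)) ^+ 2) | x in [set x | enorm x = 1]].

Definition lambda_plus (I : finType) (A : {set I}) (g : I -> 'rV[R]_N) : R :=
  sup [set Num.sqrt (\sum_(i in A) (dotv x (g i)) ^+ 2) | x in [set x | enorm x = 1]].

Definition is_frame (f : 'I_M -> 'rV[R]_N) : Prop :=
  0 < lambda_minus [set: 'I_M]%SET f.

Definition pools_partition (I : 'I_K -> {set 'I_M}) (L : nat) : Prop :=
  (forall k k', k != k' -> #|I k :&: I k'| = 0%N) /\
  (forall j : 'I_M, exists k, j \in I k) /\
  (forall k, #|I k| = L).

Definition Pinf (f : 'I_M -> 'rV[R]_N) (I : 'I_K -> {set 'I_M}) (x : 'rV[R]_N)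
  (k : 'I_K) : R := \big[Num.max/0]_(j in I k) `|dotv x (f j)|.

Definition is_switch_fun (f : 'I_M -> 'rV[R]_N) (I : 'I_K -> {set 'I_M})
  (sw : 'rV[R]_N -> 'I_K -> 'I_M) : Prop :=
  forall x k, sw x k \in I k /\
    (forall j, j \in I k -> `|dotv x (f j)| <= `|dotv x (f (sw x k))|).

Definition switches (sw : 'rV[R]_N -> 'I_K -> 'I_M) : set ('I_K -> 'I_M) :=
  [set sw x | x in [set: 'rV[R]_N]].

Definition cone (f : 'I_M -> 'rV[R]_N) (I : 'I_K -> {set 'I_M})
  (s : 'I_K -> 'I_M) : set 'rV[R]_N :=
  [set x | forall k j, j \in I k -> `|dotv x (f j)| <= `|dotv x (f (s k))|].

(* the map F_s|_Omega, with values in R^{|Omega|} represented as functions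
   on 'I_K whose coordinates outside Omega are ignored *)
Definition Fs_restr (f : 'I_M -> 'rV[R]_N) (s : 'I_K -> 'I_M)
  (x : 'rV[R]_N) : 'I_K -> R := fun k => dotv x (f (s k)).

Definition dotO (O : {set 'I_K}) (u v : 'I_K -> R) : R := \sum_(k in O) u k * v k.
Definition normO (O : {set 'I_K}) (u : 'I_K -> R) : R := Num.sqrt (dotO O u u).

Definition thetaO (O : {set 'I_K}) (u v : 'I_K -> R) : R :=
  acos (`|dotO O u v| / (normO O u * normO O v)).

Definition beta (f : 'I_M -> 'rV[R]_N) (I : 'I_K -> {set 'I_M})
  (s s' : 'I_K -> 'I_M) (O : {set 'I_K}) : R :=
  inf [set thetaO O (Fs_restr f s x) (Fs_restr f s' y) |
       x in [set x | cone f I s x /\ normO O (Fs_restr f s x) != 0] &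
       y in [set y | cone f I s' y /\ normO O (Fs_restr f s' y) != 0]].

Definition pools_of (I : 'I_K -> {set 'I_M}) (O : {set 'I_K}) : {set 'I_M} :=
  \bigcup_(k in O) I k.

Definition Lambda (f : 'I_M -> 'rV[R]_N) (I : 'I_K -> {set 'I_M})
  (s s' : 'I_K -> 'I_M) (O : {set 'I_K}) : R :=
  lambda_minus (pools_of I O) f * sin (beta f I s s' O).

Definition Jset (s s' : 'I_K -> 'I_M) : {set 'I_K} := [set k | s k == s' k]%SET.

Definition lam_s (f : 'I_M -> 'rV[R]_N) (s : 'I_K -> 'I_M) (O : {set 'I_K}) : R :=
  lambda_minus O (fun k => f (s k)).

Definition Acoef (f : 'I_M -> 'rV[R]_N) (I : 'I_K -> {set 'I_M}) (L : nat)
  (s s' : 'I_K -> 'I_M) : R :=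
  let J := Jset s s' in
  Num.sqrt (
    inf [set lam_s f s O ^+ 2 + lam_s f s (J :\: O) ^+ 2 | O in [set O : {set 'I_K} | O \subset J]]
    + (4 * L)%:R^-1 *
      inf [set Lambda f I s s' O ^+ 2 + Lambda f I s s' (~: J :\: O) ^+ 2
           | O in [set O : {set 'I_K} | O \subset ~: J]]).

Definition dpm (x x' : 'rV[R]_N) : R := Num.min (enorm (x - x')) (enorm (x + x')).

End Defs.

(* Main.v *)
Require Import Defs.
From mathcomp Require Import all_boot all_order all_algebra.
From mathcomp Require Import classical_sets boolp reals trigo.
From mathcomp Require Import ring lra.
Set Implicit Arguments. Unset Strict Implicit.
Import Order.TTheory GRing.Theory Num.Theory.
Local Open Scope ring_scope.
Local Open Scope classical_set_scope.


Section Helpers.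
Variables (R : realType) (N : nat).
Implicit Types (x y : 'rV[R]_N).

Lemma dotvDl x y g : dotv (x + y) g = dotv x g + dotv y g.
Proof. by rewrite /dotv -big_split; apply: eq_bigr => i _; rewrite mxE mulrDl. Qed.

Lemma dotvNl x g : dotv (- x) g = - dotv x g.
Proof. by rewrite /dotv -sumrN; apply: eq_bigr => i _; rewrite mxE mulNr. Qed.

Lemma dotvBl x y g : dotv (x - y) g = dotv x g - dotv y g.
Proof. by rewrite dotvDl dotvNl. Qed.

Lemma dotvZl a x g : dotv (a *: x) g = a * dotv x g.
Proof. by rewrite /dotv mulr_sumr; apply: eq_bigr => i _; rewrite mxE mulrA. Qed.

Lemma dotvC x y : dotv x y = dotv y x.
Proof. by rewrite /dotv; apply: eq_bigr => i _; rewrite mulrC. Qed.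

Lemma dotv_ge0 x : 0 <= dotv x x.
Proof. by apply: sumr_ge0 => i _; rewrite -expr2 sqr_ge0. Qed.

Lemma enorm_ge0 x : 0 <= enorm x.
Proof. exact: sqrtr_ge0. Qed.

Lemma enorm2 x : enorm x ^+ 2 = dotv x x.
Proof. by rewrite /enorm sqr_sqrtr // dotv_ge0. Qed.

Lemma sq_le (a b : R) : 0 <= a -> a <= b -> a ^+ 2 <= b ^+ 2.
Proof. by move=> ha hab; rewrite !expr2; apply: ler_pM. Qed.

Lemma lambda_minus_ge0 (I : finType) (A : {set I}) (g : I -> 'rV[R]_N) :
  0 <= lambda_minus A g.
Proof.
rewrite /lambda_minus.
set S := (X in inf X).
have [hS|hS] := pselect (S !=set0).
  apply: lb_le_inf => //; move=> _ [z _ <-]; exact: sqrtr_ge0.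
have -> : S = set0.
  by apply/seteqP; split => // z Sz; apply: hS; exists z.
by rewrite inf0.
Qed.

Lemma frame_ineq (I : finType) (A : {set I}) (g : I -> 'rV[R]_N) y :
  lambda_minus A g ^+ 2 * enorm y ^+ 2 <= \sum_(i in A) (dotv y (g i)) ^+ 2.
Proof.
have hQ : forall z, 0 <= \sum_(i in A) (dotv z (g i)) ^+ 2.
  by move=> z; apply: sumr_ge0 => i _; exact: sqr_ge0.
have [e0|e0] := eqVneq (enorm y) 0.
  by rewrite e0 expr0n /= mulr0.
have ep : 0 < enorm y by rewrite lt_neqAle eq_sym e0 enorm_ge0.
set z := (enorm y)^-1 *: y.
have ez : enorm z = 1.
  rewrite /enorm /z dotvZl [dotv y _]dotvC dotvZl mulrA -expr2 -enorm2.
  by rewrite exprVn mulVf ?sqrtr1 // expf_neq0.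
have hl : lambda_minus A g <= Num.sqrt (\sum_(i in A) (dotv z (g i)) ^+ 2).
  rewrite /lambda_minus; apply: ge_inf.
    exists 0 => _ [w _ <-]; exact: sqrtr_ge0.
  by exists z.
have hl2 : lambda_minus A g ^+ 2 <= \sum_(i in A) (dotv z (g i)) ^+ 2.
  by rewrite -(sqr_sqrtr (hQ z)); apply: sq_le => //; exact: lambda_minus_ge0.
have -> : \sum_(i in A) (dotv y (g i)) ^+ 2 =
          enorm y ^+ 2 * \sum_(i in A) (dotv z (g i)) ^+ 2.
  rewrite mulr_sumr; apply: eq_bigr => i _.
  rewrite /z dotvZl exprMn mulrA -exprMn mulfV ?expr1n ?mul1r //.
rewrite mulrC; apply: ler_wpM2l => //; exact: sqr_ge0.
Qed.

End Helpers.


Section Angle.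
Variables (R : realType) (K : nat) (O : {set 'I_K}).
Implicit Types (u v : 'I_K -> R).

Lemma dotO_expand (a b : R) u v :
  \sum_(k in O) (a * u k + b * v k) ^+ 2 =
  a ^+ 2 * dotO O u u + (a * b) *+ 2 * dotO O u v + b ^+ 2 * dotO O v v.
Proof.
rewrite /dotO !mulr_sumr -!big_split /=; apply: eq_bigr => k _.
rewrite -mulr_natl; ring.
Qed.

Lemma dotO_ge0 u : 0 <= dotO O u u.
Proof. by apply: sumr_ge0 => k _; rewrite -expr2 sqr_ge0. Qed.

Lemma dotO0 u v : dotO O v v = 0 -> dotO O u v = 0.
Proof.
move=> h; have hv : forall k, k \in O -> v k * v k = 0.
  by apply: psumr_eq0P h => k _; rewrite -expr2 sqr_ge0.
rewrite /dotO big1 // => k kO; have := hv k kO.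
by move/eqP; rewrite mulf_eq0 orbb => /eqP ->; rewrite mulr0.
Qed.

Lemma dotOC u v : dotO O u v = dotO O v u.
Proof. by apply: eq_bigr => k _; rewrite mulrC. Qed.

Lemma CS u v : dotO O u v ^+ 2 <= dotO O u u * dotO O v v.
Proof.
have [V0|V0] := eqVneq (dotO O v v) 0.
  by rewrite V0 (dotO0 u V0) expr0n /= mulr0.
have Vp : 0 < dotO O v v by rewrite lt_neqAle eq_sym V0 dotO_ge0.
have := dotO_expand (dotO O v v) (- dotO O u v) u v.
have h0 : 0 <= \sum_(k in O) (dotO O v v * u k + - dotO O u v * v k) ^+ 2.
  by apply: sumr_ge0 => k _; exact: sqr_ge0.
move=> E; rewrite E in h0.
have : 0 <= dotO O v v * (dotO O u u * dotO O v v - dotO O u v ^+ 2).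
  suff <- : dotO O v v ^+ 2 * dotO O u u + dotO O v v * - dotO O u v *+ 2 * dotO O u v +
    (- dotO O u v) ^+ 2 * dotO O v v = dotO O v v * (dotO O u u * dotO O v v - dotO O u v ^+ 2) by [].
  rewrite -mulr_natl; ring.
by rewrite pmulr_rge0 // subr_ge0.
Qed.

Lemma angle_lemma u v (sg : R) : sg ^+ 2 = 1 ->
  normO O u != 0 -> normO O v != 0 ->
  let t := `|dotO O u v| / (normO O u * normO O v) in
  [/\ 0 <= t, t <= 1 & (1 - t ^+ 2) * dotO O u u <= \sum_(k in O) (u k - sg * v k) ^+ 2].
Proof.
move=> hs nu nv t.
have Up : 0 < dotO O u u by rewrite lt_neqAle eq_sym dotO_ge0 andbT; apply: contra nu => /eqP; rewrite /normO => ->; rewrite sqrtr0.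
have Vp : 0 < dotO O v v by rewrite lt_neqAle eq_sym dotO_ge0 andbT; apply: contra nv => /eqP; rewrite /normO => ->; rewrite sqrtr0.
have nup : 0 < normO O u by rewrite sqrtr_gt0.
have nvp : 0 < normO O v by rewrite sqrtr_gt0.
have t2 : t ^+ 2 = dotO O u v ^+ 2 / (dotO O u u * dotO O v v).
  rewrite /t expr_div_n real_normK ?num_real // exprMn /normO !sqr_sqrtr ?dotO_ge0 //.
split.
- by rewrite /t divr_ge0 // mulr_ge0 // ltW.
- have hW : `|dotO O u v| <= normO O u * normO O v.
    have h2 : `|dotO O u v| ^+ 2 <= (normO O u * normO O v) ^+ 2.
      by rewrite real_normK ?num_real // exprMn /normO !sqr_sqrtr ?dotO_ge0 // CS.
    by move: h2; rewrite ler_pXn2r // nnegrE ?mulr_ge0 ?ltW.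
  by rewrite /t ler_pdivrMr ?mulr_gt0 // mul1r.
- have -> : \sum_(k in O) (u k - sg * v k) ^+ 2 =
            dotO O u u - (sg *+ 2) * dotO O u v + dotO O v v.
    have := dotO_expand 1 (- sg) u v.
    have -> : \sum_(k in O) (1 * u k + - sg * v k) ^+ 2 = \sum_(k in O) (u k - sg * v k) ^+ 2.
      by apply: eq_bigr => k _; rewrite mul1r mulNr.
    move=> ->; rewrite expr1n mul1r sqrrN hs mul1r mul1r mulNrn mulNr.
    by [].
  rewrite t2.
  set U := dotO O u u; set V := dotO O v v; set W := dotO O u v.
  have e : U - (sg *+ 2) * W + V - (1 - W ^+ 2 / (U * V)) * U =
            (V - sg * W) ^+ 2 / V + (1 - sg ^+ 2) * W ^+ 2 / V.
    rewrite -mulr_natl; field.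
    by rewrite andbC lt0r_neq0 ?lt0r_neq0.
  rewrite hs subrr mul0r mul0r addr0 in e.
  rewrite -subr_ge0 e; apply: divr_ge0; [exact: sqr_ge0| exact: ltW].
Qed.

End Angle.


Section Main.
Variables (R : realType) (N M K : nat).
Variables (f : 'I_M -> 'rV[R]_N) (I : 'I_K -> {set 'I_M}).

Lemma le_bigmax_seq (T : eqType) (s : seq T) (P : pred T) (F : T -> R) j0 :
  j0 \in s -> P j0 -> F j0 <= \big[Num.max/0]_(j <- s | P j) F j.
Proof.
elim: s => // a s IH; rewrite inE big_cons => /orP [/eqP <- -> | hs hp].
  by rewrite le_max lexx.
case: (P a); last exact: IH.
by rewrite le_max (IH hs hp) orbT.
Qed.

Lemma Pinf_sw (sw : 'rV[R]_N -> 'I_K -> 'I_M) x k : is_switch_fun f I sw ->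
  Pinf f I x k = `|dotv x (f (sw x k))|.
Proof.
move=> hsw; have [hin hmax] := hsw x k; rewrite /Pinf.
apply/le_anti/andP; split.
- apply: (big_ind (fun y => y <= _)) => //.
  + by move=> a b ha hb; rewrite ge_max ha hb.
- have := @le_bigmax_seq _ (index_enum _) (fun j => j \in I k) (fun j => `|dotv x (f j)|) (sw x k); apply; rewrite ?mem_index_enum //.
Qed.

Lemma pools_sum L (E : 'I_M -> R) O : pools_partition I L ->
  \sum_(j in pools_of I O) E j = \sum_(k in O) \sum_(j in I k) E j.
Proof.
move=> [hd [_ _]]; rewrite /pools_of.
pose F := fun k => if k \in O then I k else (finset.set0 : {set _}).
have -> : (\bigcup_(k in O) I k)%SET = (\bigcup_k F k)%SET by rewrite big_mkcond.
rewrite partition_disjoint_bigcup.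
  rewrite [RHS]big_mkcond; apply: eq_bigr => k _; rewrite /F.
  by case: (k \in O) => //; rewrite big_set0.
move=> i j hij; rewrite /F; case: (i \in O); case: (j \in O);
  rewrite -setI_eq0 ?finset.set0I ?finset.setI0 //.
by rewrite -cards_eq0 hd.
Qed.

End Main.


Section Pieces.
Variables (R : realType) (N M K : nat).
Variables (f : 'I_M -> 'rV[R]_N) (I : 'I_K -> {set 'I_M}).

Lemma dpm_ge0 (x x' : 'rV[R]_N) : 0 <= dpm x x'.
Proof. by rewrite /dpm le_min !enorm_ge0. Qed.

Lemma dpm2_le (x x' : 'rV[R]_N) :
  dpm x x' ^+ 2 <= enorm (x - x') ^+ 2 /\ dpm x x' ^+ 2 <= enorm (x + x') ^+ 2.
Proof.
split; apply: sq_le; rewrite ?dpm_ge0 // /dpm ge_min lexx ?orbT //.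
Qed.

Lemma dotvDr (x y g : 'rV[R]_N) : dotv g (x + y) = dotv g x + dotv g y.
Proof. by rewrite dotvC dotvDl !(dotvC _ g). Qed.
Lemma dotvNr (x g : 'rV[R]_N) : dotv g (- x) = - dotv g x.
Proof. by rewrite dotvC dotvNl dotvC. Qed.

Lemma dpm2_par (x x' : 'rV[R]_N) :
  dpm x x' ^+ 2 <= enorm x ^+ 2 + enorm x' ^+ 2.
Proof.
have [h1 h2] := dpm2_le x x'.
have e : enorm (x - x') ^+ 2 + enorm (x + x') ^+ 2 = 2 * (enorm x ^+ 2 + enorm x' ^+ 2).
  rewrite !enorm2 !(dotvDl, dotvNl, dotvDr, dotvNr) (dotvC x' x); ring.
lra.
Qed.

Lemma piece1 (s : 'I_K -> 'I_M) (y : 'rV[R]_N) (d : R) (O : {set 'I_K}) (F : 'I_K -> R) :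
  0 <= d -> d ^+ 2 <= enorm y ^+ 2 ->
  (forall k, k \in O -> F k = dotv y (f (s k)) ^+ 2) ->
  d ^+ 2 * lam_s f s O ^+ 2 <= \sum_(k in O) F k.
Proof.
move=> hd hdy hF.
rewrite (eq_bigr _ hF).
apply: le_trans (frame_ineq _ _ y).
rewrite mulrC /lam_s; apply: ler_wpM2l => //; exact: sqr_ge0.
Qed.

End Pieces.


Section Piece3.
Variables (R : realType) (N M K : nat).
Variables (f : 'I_M -> 'rV[R]_N) (I : 'I_K -> {set 'I_M}).

Lemma zero_of_dotO (O : {set 'I_K}) (u : 'I_K -> R) :
  normO O u == 0 -> dotO O u u = 0 /\ (forall k, k \in O -> u k = 0).
Proof.
rewrite /normO sqrtr_eq0 => h.
have U0 : dotO O u u = 0 by apply/le_anti; rewrite h dotO_ge0.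
split => // k kO.
have hk : u k * u k = 0.
  by apply: (psumr_eq0P _ U0) => // j _; rewrite -expr2 sqr_ge0.
by move/eqP: hk; rewrite mulf_eq0 orbb => /eqP.
Qed.

Lemma theta_lb (s s' : 'I_K -> 'I_M) (O : {set 'I_K}) :
  lbound [set thetaO O (Fs_restr f s x) (Fs_restr f s' y) |
       x in [set x | cone f I s x /\ normO O (Fs_restr f s x) != 0] &
       y in [set y | cone f I s' y /\ normO O (Fs_restr f s' y) != 0]] 0.
Proof.
move=> _ [a [_ ha] [b [_ hb] <-]].
have [h0 h1 _] := angle_lemma (expr1n _ 2) ha hb.
rewrite /thetaO; apply: acos_ge0.
by rewrite h1 andbT (le_trans _ h0) // lerN10.
Qed.

Lemma stepA (sw : 'rV[R]_N -> 'I_K -> 'I_M) x x' (O : {set 'I_K}) (sg : R) :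
  is_switch_fun f I sw -> sg ^+ 2 = 1 ->
  let u := Fs_restr f (sw x) x in let v := Fs_restr f (sw x') x' in
  let S := \sum_(k in O) (u k - sg * v k) ^+ 2 in
  let bt := beta f I (sw x) (sw x') O in
  sin bt ^+ 2 * dotO O u u <= S /\ sin bt ^+ 2 * dotO O v v <= S.
Proof.
move=> hsw hs u v S bt.
have S0 : 0 <= S by apply: sumr_ge0 => k _; exact: sqr_ge0.
have sin1 : sin bt ^+ 2 <= 1 by rewrite sin2cos2; have := sqr_ge0 (cos bt); lra.
have sin0 : 0 <= sin bt ^+ 2 by exact: sqr_ge0.
have conex : forall z, cone f I (sw z) z.
  by move=> z k j hj; exact: (hsw z k).2 j hj.
case nu: (normO O u == 0).
  have [U0 uk] := zero_of_dotO nu.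
  split; first by rewrite U0 mulr0.
  have -> : S = dotO O v v.
    apply: eq_bigr => k kO; rewrite uk // sub0r sqrrN exprMn hs mul1r expr2 //.
  by apply: ler_piMl => //; exact: dotO_ge0.
case nv: (normO O v == 0).
  have [V0 vk] := zero_of_dotO nv.
  split; last by rewrite V0 mulr0.
  have -> : S = dotO O u u.
    apply: eq_bigr => k kO; rewrite vk // mulr0 subr0 expr2 //.
  by apply: ler_piMl => //; exact: dotO_ge0.
have [t0 t1 hU] := angle_lemma hs (negbT nu) (negbT nv).
have [_ _ hV] := angle_lemma hs (negbT nv) (negbT nu).
set t := `|dotO O u v| / (normO O u * normO O v) in t0 t1 hU.
rewrite dotOC [normO O v * _]mulrC -/t in hV.
have SV : \sum_(k in O) (v k - sg * u k) ^+ 2 = S.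
  apply: eq_bigr => k _.
  have e : (v k - sg * u k) ^+ 2 - (u k - sg * v k) ^+ 2 =
           (sg ^+ 2 - 1) * (u k ^+ 2 - v k ^+ 2) by ring.
  by rewrite hs subrr mul0r in e; apply/eqP; rewrite -subr_eq0 e.
rewrite SV in hV.
have hth : bt <= acos t.
  apply: ge_inf; first by exists 0; exact: theta_lb.
  exists x; first by split; [exact: conex | rewrite nu].
  exists x'; first by split; [exact: conex | rewrite nv].
  by [].
have hb0 : 0 <= bt.
  apply: lb_le_inf; last exact: theta_lb.
  exists (acos t); exists x; first by split; [exact: conex | rewrite nu].
  exists x'; first by split; [exact: conex | rewrite nv].
  by [].
have tI : t \in `[(-1), 1]%R by rewrite in_itv /= t1 andbT (le_trans _ t0) // lerN10.
have ct : cos (acos t) = t by rewrite acosK.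
have api : acos t <= pi by apply: acos_lepi; rewrite t1 andbT (le_trans _ t0) // lerN10.
have a0 : 0 <= acos t by apply: acos_ge0; rewrite t1 andbT (le_trans _ t0) // lerN10.
have hcos : t <= cos bt.
  rewrite -ct leNgt; apply/negP => h.
  have m1 : bt \in `[0, pi]%R by rewrite in_itv /= hb0 (le_trans hth api).
  have m2 : acos t \in `[0, pi]%R by rewrite in_itv /= a0 api.
  by move: h; rewrite (ltr_cos m2 m1) ltNge hth.
have hs2 : sin bt ^+ 2 <= 1 - t ^+ 2.
  rewrite sin2cos2; have := sq_le t0 hcos; lra.
split.
  apply: le_trans hU; apply: ler_wpM2r => //; exact: dotO_ge0.
apply: le_trans hV; apply: ler_wpM2r => //; exact: dotO_ge0.
Qed.

Lemma stepB L (sw : 'rV[R]_N -> 'I_K -> 'I_M) z (O : {set 'I_K}) :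
  is_switch_fun f I sw -> pools_partition I L ->
  lambda_minus (pools_of I O) f ^+ 2 * enorm z ^+ 2 <=
  L%:R * dotO O (Fs_restr f (sw z) z) (Fs_restr f (sw z) z).
Proof.
move=> hsw hpp.
apply: le_trans (frame_ineq (pools_of I O) f z) _.
rewrite (pools_sum _ _ hpp) /dotO mulr_sumr; apply: ler_sum => k kO.
apply: (@le_trans _ _ (\sum_(j in I k) (Fs_restr f (sw z) z k) ^+ 2)).
  apply: ler_sum => j hj; rewrite /Fs_restr.
  rewrite -[dotv z (f j) ^+ 2]real_normK ?num_real //.
  rewrite -[dotv z (f (sw z k)) ^+ 2]real_normK ?num_real //.
  apply: sq_le => //; exact: (hsw z k).2 j hj.
have [_ [_ hL]] := hpp.
by rewrite sumr_const hL mulr_natl expr2.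
Qed.

Lemma piece3 L (sw : 'rV[R]_N -> 'I_K -> 'I_M) x x' (O : {set 'I_K}) (sg : R) :
  is_switch_fun f I sw -> pools_partition I L -> sg ^+ 2 = 1 ->
  dpm x x' ^+ 2 * ((4 * L)%:R^-1 * Lambda f I (sw x) (sw x') O ^+ 2)
   <= \sum_(k in O) (dotv x (f (sw x k)) - sg * dotv x' (f (sw x' k))) ^+ 2.
Proof.
move=> hsw hpp hs.
set S := (X in _ <= X).
pose u := Fs_restr f (sw x) x; pose v := Fs_restr f (sw x') x'.
have [hAu hAv] : sin (beta f I (sw x) (sw x') O) ^+ 2 * dotO O u u <= S /\
    sin (beta f I (sw x) (sw x') O) ^+ 2 * dotO O v v <= S := stepA x x' O hsw hs.
have S0 : 0 <= S by apply: sumr_ge0 => k _; exact: sqr_ge0.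
have [->|Lp] := eqVneq L 0%N.
  by rewrite muln0 invr0 mul0r mulr0.
set bt := beta _ _ _ _ _ in hAu hAv.
set lam := lambda_minus (pools_of I O) f.
have hBx := stepB x O hsw hpp; have hBx' := stepB x' O hsw hpp.
rewrite -/lam in hBx hBx'.
rewrite -/u in hBx; rewrite -/v in hBx'.
set U := dotO O u u in hAu hBx.
set V := dotO O v v in hAv hBx'.
have hd := dpm2_par x x'.
rewrite /Lambda -/lam -/bt exprMn.
set d2 := dpm x x' ^+ 2 in hd *.
set nx := enorm x ^+ 2 in hd hBx; set nx' := enorm x' ^+ 2 in hd hBx'.
set P := lam ^+ 2 * sin bt ^+ 2.
rewrite natrM. set Lr := (L%:R : R).
have Lrp : 0 < Lr by rewrite ltr0n lt0n.
have P0 : 0 <= P by rewrite mulr_ge0 // sqr_ge0.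
have s0 : 0 <= sin bt ^+ 2 by exact: sqr_ge0.
have k1 : P * nx <= Lr * S.
  have e1 : P * nx = sin bt ^+ 2 * (lam ^+ 2 * nx) by rewrite /P; ring.
  rewrite e1; apply: le_trans (_ : sin bt ^+ 2 * (Lr * U) <= _).
    by apply: ler_wpM2l.
  have e2 : sin bt ^+ 2 * (Lr * U) = Lr * (sin bt ^+ 2 * U) by ring.
  by rewrite e2; apply: ler_wpM2l => //; exact: ltW.
have k2 : P * nx' <= Lr * S.
  have e1 : P * nx' = sin bt ^+ 2 * (lam ^+ 2 * nx') by rewrite /P; ring.
  rewrite e1; apply: le_trans (_ : sin bt ^+ 2 * (Lr * V) <= _).
    by apply: ler_wpM2l.
  have e2 : sin bt ^+ 2 * (Lr * V) = Lr * (sin bt ^+ 2 * V) by ring.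
  by rewrite e2; apply: ler_wpM2l => //; exact: ltW.
have k3 : d2 * P <= (nx + nx') * P by apply: ler_wpM2r.
have LS : 0 <= Lr * S by rewrite mulr_ge0 // ltW.
rewrite mulrCA mulrC ler_pdivrMr ?mulr_gt0 //.
rewrite mulrDl in k3. nra.
Qed.

End Piece3.

Unset Implicit Arguments. Set Strict Implicit.


Lemma absdiff_pos (R : realType) (a b : R) : 0 <= a * b -> (`|a| - `|b|) ^+ 2 = (a - b) ^+ 2.
Proof.
move=> h; rewrite !sqrrB !real_normK ?num_real // -normrM ger0_norm //.
Qed.

Lemma absdiff_neg (R : realType) (a b : R) : ~~ (0 <= a * b) -> (`|a| - `|b|) ^+ 2 = (a + b) ^+ 2.
Proof.
rewrite -ltNge => h; rewrite sqrrB sqrrD !real_normK ?num_real // -normrM ltr0_norm //.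
by rewrite mulNrn opprK.
Qed.

Theorem proposition4 (R : realType) (N M K L : nat)
  (f : 'I_M -> 'rV[R]_N) (I : 'I_K -> {set 'I_M})
  (sw : 'rV[R]_N -> 'I_K -> 'I_M) :
  is_frame f -> pools_partition I L -> is_switch_fun f I sw ->
  forall x x' : 'rV[R]_N,
    dpm x x' * inf [set Acoef f I L s s' | s in switches sw & s' in switches sw]
    <= Num.sqrt (\sum_(k < K) (Pinf f I x k - Pinf f I x' k) ^+ 2).
Proof.
move=> _ hpp hsw x x'.
pose a k := dotv x (f (sw x k)); pose b k := dotv x' (f (sw x' k)).
have PE : \sum_(k < K) (Pinf f I x k - Pinf f I x' k) ^+ 2 =
          \sum_(k < K) (`|a k| - `|b k|) ^+ 2.
  by apply: eq_bigr => k _; rewrite !(Pinf_sw _ _ hsw).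
rewrite PE.
set J := Jset (sw x) (sw x').
pose P := [set k | 0 <= a k * b k]%SET.
set c := ((4 * L)%:R^-1 : R).
have c0 : 0 <= c by rewrite invr_ge0.
set d2 := dpm x x' ^+ 2.
have d20 : 0 <= d2 by exact: sqr_ge0.
set T := \sum_(k < K) _.
pose inf1 := inf [set lam_s f (sw x) O ^+ 2 + lam_s f (sw x) (J :\: O) ^+ 2
                 | O in [set O : {set 'I_K} | O \subset J]].
pose inf2 := inf [set Lambda f I (sw x) (sw x') O ^+ 2 + Lambda f I (sw x) (sw x') (~: J :\: O) ^+ 2
                 | O in [set O : {set 'I_K} | O \subset ~: J]].
pose O1 := (J :&: P)%SET; pose O2 := (~: J :&: P)%SET.
have hi1 : inf1 <= lam_s f (sw x) O1 ^+ 2 + lam_s f (sw x) (J :\: O1) ^+ 2.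
  apply: ge_inf; first by exists 0 => _ [O _ <-]; rewrite addr_ge0 // sqr_ge0.
  by exists O1 => //; apply: subsetIl.
have hi2 : inf2 <= Lambda f I (sw x) (sw x') O2 ^+ 2 + Lambda f I (sw x) (sw x') (~: J :\: O2) ^+ 2.
  apply: ge_inf; first by exists 0 => _ [O _ <-]; rewrite addr_ge0 // sqr_ge0.
  by exists O2 => //; apply: subsetIl.
have eD1 : (J :\: O1 = J :\: P)%SET.
  by apply/finset.setP => k; rewrite !inE; case: (sw x k == sw x' k); case: (0 <= a k * b k).
have eD2 : (~: J :\: O2 = ~: J :\: P)%SET.
  by apply/finset.setP => k; rewrite !inE; case: (sw x k == sw x' k); case: (0 <= a k * b k).
have [hdm hdp] := dpm2_le x x'.
have Tsplit : T = \sum_(k in O1) (`|a k| - `|b k|) ^+ 2 + \sum_(k in (J :\: P)%SET) (`|a k| - `|b k|) ^+ 2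
   + (\sum_(k in O2) (`|a k| - `|b k|) ^+ 2 + \sum_(k in (~: J :\: P)%SET) (`|a k| - `|b k|) ^+ 2).
  rewrite /T (bigID (fun k => k \in J)) /=.
  have -> : \sum_(k < K | ~~ (k \in J)) (`|a k| - `|b k|) ^+ 2 =
            \sum_(k in (~: J)%SET) (`|a k| - `|b k|) ^+ 2.
    by apply: eq_bigl => k; rewrite finset.in_setC.
  by rewrite (big_setID (A:=J) P) (big_setID (A:=(~: J)%SET) P).
rewrite eD1 in hi1; rewrite eD2 in hi2.
have inJ : forall k, k \in J -> sw x' k = sw x k.
  by move=> k; rewrite inE => /eqP ->.
have h1 : d2 * lam_s f (sw x) O1 ^+ 2 <= \sum_(k in O1) (`|a k| - `|b k|) ^+ 2.
  apply: (piece1 (y := x - x')) => //; first exact: dpm_ge0.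
  move=> k; rewrite !inE => /andP [kJ kP].
  rewrite absdiff_pos // dotvBl /b (inJ k) //; rewrite inE //.
have h1' : d2 * lam_s f (sw x) (J :\: P) ^+ 2 <= \sum_(k in (J :\: P)%SET) (`|a k| - `|b k|) ^+ 2.
  apply: (piece1 (y := x + x')) => //; first exact: dpm_ge0.
  move=> k; rewrite !inE => /andP [kP kJ].
  rewrite absdiff_neg // dotvDl /b (inJ k) //; rewrite inE //.
have h2 : d2 * (c * Lambda f I (sw x) (sw x') O2 ^+ 2) <= \sum_(k in O2) (`|a k| - `|b k|) ^+ 2.
  have -> : \sum_(k in O2) (`|a k| - `|b k|) ^+ 2 = \sum_(k in O2) (a k - 1 * b k) ^+ 2.
    apply: eq_bigr => k; rewrite !inE => /andP [_ kP].
    by rewrite mul1r absdiff_pos.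
  exact: (piece3 _ _ _ hsw hpp (expr1n _ 2)).
have h2' : d2 * (c * Lambda f I (sw x) (sw x') (~: J :\: P) ^+ 2) <=
     \sum_(k in (~: J :\: P)%SET) (`|a k| - `|b k|) ^+ 2.
  have -> : \sum_(k in (~: J :\: P)%SET) (`|a k| - `|b k|) ^+ 2 =
            \sum_(k in (~: J :\: P)%SET) (a k - (-1) * b k) ^+ 2.
    apply: eq_bigr => k; rewrite !inE => /andP [kP _].
    by rewrite mulN1r opprK absdiff_neg.
  by apply: (piece3 _ _ _ hsw hpp); rewrite sqrrN expr1n.
have hA : d2 * (inf1 + c * inf2) <= T.
  rewrite Tsplit.
  have e1 := ler_wpM2l d20 hi1.
  have e2 := ler_wpM2l d20 (ler_wpM2l c0 hi2).
  move: e1 e2; rewrite !mulrDr; lra.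
have hinf : inf [set Acoef f I L s s' | s in switches sw & s' in switches sw]
            <= Acoef f I L (sw x) (sw x').
  apply: ge_inf; first by exists 0 => _ [s _ [s' _ <-]]; exact: sqrtr_ge0.
  exists (sw x); first by exists x.
  by exists (sw x'); first by exists x'.
apply: le_trans (ler_wpM2l (dpm_ge0 x x') hinf) _.
rewrite /Acoef /= -/inf1 -/inf2 -/c.
rewrite -[dpm x x' in X in X <= _]ger0_norm ?dpm_ge0 // -sqrtr_sqr -sqrtrM //.
exact: ler_wsqrtr.
Qed.
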